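(* For $k\in\mathbb{N}$ let $a_k=\dfrac{|B_{2k}|\,(2k-2)\,4^{k}}{(2k)!}$, where $B_{2k}$ denotes the Bernoulli number. For every $x\in(0,\pi/2)$ and every integer $m\ge 2$, $$2+\sum_{k=2}^{m-1}a_k x^{2k}+\Big(\frac{2x}{\pi}\Big)^{2m}\Big(\frac{\pi^2}{4}-2-\sum_{k=2}^{m-1}a_k\Big(\frac{\pi}{2}\Big)^{2k}\Big)>\Big(\frac{x}{\sin x}\Big)^{2}+\frac{x}{\tan x}>2+\sum_{k=2}^{m}a_k x^{2k},$$ where empty sums equal $0$.
   Context: $B_j$ are the Bernoulli numbers ($B_2=1/6$, $B_4=-1/30$, $B_6=1/42,\dots$). *)

(* Defs.v *)
From Stdlib Require Import Reals List Lra Factorial.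
Import ListNotations.
Open Scope R_scope.

(* Bernoulli numbers, convention B_0 = 1 and
   sum_{j=0}^{n} C(n+1,j) B_j = 0 for n >= 1 (so B_1 = -1/2, B_2 = 1/6, ...).
   blist n = [B_0; ...; B_n]. *)
Fixpoint blist (n : nat) : list R :=
  match n with
  | O => [1]
  | S n' =>
      let l := blist n' in
      l ++ [ - / INR (S n' + 1) *
             fold_right Rplus 0
               (map (fun j => C (S n' + 1) j * nth j l 0) (seq 0 (S n'))) ]
  end.

Definition bernoulli (n : nat) : R := nth n (blist n) 0.

Definition a_coef (k : nat) : R :=
  Rabs (bernoulli (2 * k)) * INR (2 * k - 2) * 4 ^ k / INR (fact (2 * k)).

(* sum_{k=2}^{n} f k  (empty, = 0, when n < 2) *)
Definition sum_from2 (n : nat) (f : nat -> R) : R :=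
  fold_right Rplus 0 (map f (seq 2 (n - 1))).

Lemma bernoulli_sanity :
  bernoulli 2 = 1/6 /\ bernoulli 4 = -1/30.
Proof.
  unfold bernoulli; simpl; unfold C; simpl.
  split; field_simplify; lra.
Qed.

(* Main.v *)
Require Import Defs.
From Stdlib Require Import Reals Lra Lia List Factorial.
From Coquelicot Require Import Coquelicot.
Import ListNotations.
Open Scope R_scope.

Lemma fold_plus_acc (l : list R) (a : R) :
  fold_right Rplus a l = a + fold_right Rplus 0 l.
Proof. induction l; simpl; [ring| rewrite IHl; ring]. Qed.

Lemma fold_seq_sum (f : nat -> R) (n : nat) :
  fold_right Rplus 0 (map f (seq 0 (S n))) = sum_f_R0 f n.
Proof.
  induction n.
  - simpl; ring.
  - rewrite seq_S, map_app, fold_right_app, fold_plus_acc, IHn.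
    simpl. ring.
Qed.

Lemma blist_length n : length (blist n) = S n.
Proof.
  induction n; simpl; auto. rewrite length_app, IHn. simpl. lia.
Qed.

Lemma blist_nth n j : (j <= n)%nat -> nth j (blist n) 0 = bernoulli j.
Proof.
  induction n; intros Hj.
  - assert (j = 0%nat) by lia; subst; reflexivity.
  - destruct (Nat.eq_dec j (S n)) as [->|Hne]; [reflexivity|].
    simpl blist. rewrite app_nth1 by (rewrite blist_length; lia).
    apply IHn; lia.
Qed.

Lemma bern_rec n :
  bernoulli (S n) = - / INR (S n + 1) *
     sum_f_R0 (fun j => Binomial.C (S n + 1) j * bernoulli j) n.
Proof.
  unfold bernoulli at 1. cbn [blist].
  rewrite app_nth2 by (rewrite blist_length; lia).
  rewrite blist_length, Nat.sub_diag.
  match goal with |- nth 0 [?v] 0 = _ => change (nth 0 [v] 0) with v end.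
  f_equal. rewrite <- fold_seq_sum. f_equal.
  apply map_ext_in. intros j Hj. apply in_seq in Hj.
  rewrite blist_nth by lia. reflexivity.
Qed.

Definition bb (n : nat) : R := bernoulli n / INR (fact n).
Definition Es (n : nat) : R := / INR (fact (S n)).

Lemma INR_fact_pos n : 0 < INR (fact n).
Proof. apply lt_0_INR, lt_O_fact. Qed.

Lemma sum_shift_last (f : nat -> R) n :
  sum_f_R0 f (S n) = sum_f_R0 f n + f (S n).
Proof. reflexivity. Qed.

Lemma bb_Es_conv n : PS_mult bb Es n = if Nat.eqb n 0 then 1 else 0.
Proof.
  unfold PS_mult. destruct n as [|n].
  - simpl. unfold bb, Es. unfold bernoulli. simpl. field.
  - simpl Nat.eqb. rewrite sum_shift_last, Nat.sub_diag.
    assert (Hr := bern_rec n).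
    assert (Hs : sum_f_R0 (fun k => bb k * Es (S n - k)) n =
       / INR (fact (S n + 1)) * sum_f_R0 (fun j => Binomial.C (S n + 1) j * bernoulli j) n).
    { rewrite scal_sum. apply sum_eq. intros k Hk.
      unfold bb, Es, Binomial.C.
      replace (S n + 1 - k)%nat with (S (S n - k)) by lia.
      assert (H1 := INR_fact_pos k). assert (H2 := INR_fact_pos (S (S n - k))).
      assert (H3 := INR_fact_pos (S n + 1)).
      field. split; lra. }
    rewrite Hs.
    assert (Hf : INR (fact (S n + 1)) = INR (S n + 1) * INR (fact (S n))).
    { replace (S n + 1)%nat with (S (S n)) by lia. rewrite fact_simpl, mult_INR. reflexivity. }
    assert (HN : 0 < INR (S n + 1)) by (apply lt_0_INR; lia).
    assert (H1 := INR_fact_pos (S n)).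
    set (s := sum_f_R0 _ n) in *.
    assert (Hs' : s = - INR (S n + 1) * bernoulli (S n)).
    { rewrite Hr. field. lra. }
    rewrite Hs', Hf. unfold bb, Es. change (fact 1) with 1%nat. rewrite INR_1. field. lra.
Qed.

Lemma rad_bound (a : nat -> R) (M K : R) :
  0 < K -> (forall n, Rabs (a n) <= M * K ^ n) -> Rbar_le (Finite (/ K)) (CV_radius a).
Proof.
  intros HK Hb. destruct (CV_radius_bounded a) as [Hub _].
  apply Hub. exists M. intros n.
  rewrite Rabs_mult, <- RPow_abs, (Rabs_right (/ K)) by (left; apply Rinv_0_lt_compat; lra).
  rewrite pow_inv.
  apply Rle_trans with (M * K ^ n * / K ^ n).
  - apply Rmult_le_compat_r; [left; apply Rinv_0_lt_compat, pow_lt; lra | apply Hb].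
  - right. field. apply pow_nonzero. lra.
Qed.

Lemma sum_pow2 n : sum_f_R0 (fun k => 2 ^ k) n = 2 ^ (S n) - 1.
Proof. induction n; simpl; [ring|]. rewrite IHn. simpl. ring. Qed.

Lemma Es_le n : (1 <= n)%nat -> 0 < Es n <= / 2.
Proof.
  intros Hn. unfold Es. split. apply Rinv_0_lt_compat, INR_fact_pos.
  apply Rinv_le_contravar; [lra|].
  destruct n as [|n]; [lia|].
  rewrite fact_simpl, mult_INR.
  assert (1 <= INR (fact (S n))) by (apply (le_INR 1), lt_O_fact).
  assert (2 <= INR (S (S n))) by (apply (le_INR 2); lia). nra.
Qed.

Lemma bb_bound_aux n : forall k, (k <= n)%nat -> Rabs (bb k) <= 2 ^ k.
Proof.
  induction n; intros k Hk.
  - assert (k = 0%nat) by lia; subst. unfold bb, bernoulli. simpl.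
    rewrite Rabs_right; lra.
  - destruct (Nat.eq_dec k (S n)) as [->|]; [|apply IHn; lia].
    assert (H := bb_Es_conv (S n)). unfold PS_mult in H. simpl Nat.eqb in H.
    rewrite sum_shift_last, Nat.sub_diag in H.
    assert (HE0 : Es 0 = 1) by (unfold Es; simpl; field).
    rewrite HE0, Rmult_1_r in H.
    assert (Hb : bb (S n) = - sum_f_R0 (fun k => bb k * Es (S n - k)) n) by lra.
    rewrite Hb, Rabs_Ropp.
    eapply Rle_trans. apply sum_f_R0_triangle.
    apply Rle_trans with (sum_f_R0 (fun k => 2 ^ k * / 2) n).
    + apply sum_Rle. intros j Hj. rewrite Rabs_mult.
      destruct (Es_le (S n - j)) as [E1 E2]; [lia|].
      rewrite (Rabs_right (Es _)) by lra.
      apply Rmult_le_compat; try apply Rabs_pos; try lra. apply IHn; lia.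
    + rewrite <- scal_sum, sum_pow2. simpl. assert (0 < 2 ^ n) by (apply pow_lt; lra). lra.
Qed.

Lemma bb_bound n : Rabs (bb n) <= 2 ^ n.
Proof. apply (bb_bound_aux n); lia. Qed.

Definition sh (a : nat -> R) (n : nat) : R := match n with O => 0 | S m => a m end.

Lemma PSeries_sh a x : PSeries (sh a) x = x * PSeries a x.
Proof.
  rewrite <- PSeries_incr_1. apply PSeries_ext. intros [|n]; reflexivity.
Qed.

Lemma PS_add a b x : ex_pseries a x -> ex_pseries b x ->
  PSeries (fun n => a n + b n) x = PSeries a x + PSeries b x.
Proof. intros. rewrite <- PSeries_plus by auto. apply PSeries_ext. reflexivity. Qed.

Lemma PS_sub a b x : ex_pseries a x -> ex_pseries b x ->
  PSeries (fun n => a n - b n) x = PSeries a x - PSeries b x.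
Proof. intros. rewrite <- PSeries_minus by auto. apply PSeries_ext. reflexivity. Qed.

Lemma rad_lt a r x : Rbar_le (Finite r) (CV_radius a) -> Rabs x < r -> Rbar_lt (Rabs x) (CV_radius a).
Proof. intros H1 H2. eapply Rbar_lt_le_trans; [|exact H1]. exact H2. Qed.

Lemma ex_ps a r x : Rbar_le (Finite r) (CV_radius a) -> Rabs x < r -> ex_pseries a x.
Proof. intros. apply CV_radius_inside. eapply rad_lt; eauto. Qed.

Lemma locally_of (c r : R) (P : R -> Prop) : 0 < r -> (forall t, Rabs (t - c) < r -> P t) -> locally c P.
Proof.
  intros Hr H. exists (mkposreal r Hr). intros y Hy. apply H. exact Hy.
Qed.

Lemma INR_le_pow2 n : INR (S n) <= 2 ^ n.
Proof.
  induction n. simpl; lra. rewrite S_INR. replace (2 ^ S n) with (2 * 2 ^ n) by (simpl; ring). assert (1 <= 2 ^ n) by (apply pow_R1_Rle; lra). lra.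
Qed.

Lemma PSeries_ind0 x : PSeries (fun n => if Nat.eqb n 0 then 1 else 0) x = 1.
Proof.
  rewrite PSeries_decr_1.
  - simpl. rewrite (PSeries_ext _ (fun _ => 0)) by (intros; reflexivity).
    rewrite PSeries_const_0. ring.
  - apply (ex_ps _ (Rabs x + 1)); [|lra].
    replace (Rabs x + 1) with (/ / (Rabs x + 1)) by (field; assert (0 <= Rabs x) by apply Rabs_pos; lra).
    apply (rad_bound _ 1). assert (0 <= Rabs x) by apply Rabs_pos. apply Rinv_0_lt_compat; lra.
    intros [|n]; simpl.
    + rewrite Rabs_R1; lra.
    + rewrite Rabs_R0. apply Rmult_le_pos; [lra|]. apply Rmult_le_pos; [left; apply Rinv_0_lt_compat; assert (0 <= Rabs x) by apply Rabs_pos; lra|]. apply pow_le. left; apply Rinv_0_lt_compat. assert (0 <= Rabs x) by apply Rabs_pos; lra.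
Qed.

Lemma rad_bb : Rbar_le (Finite (/ 2)) (CV_radius bb).
Proof. apply (rad_bound _ 1); [lra|]. intros; rewrite Rmult_1_l; apply bb_bound. Qed.

Lemma rad_Es : Rbar_le (Finite (/ 1)) (CV_radius Es).
Proof.
  apply (rad_bound _ 1); [lra|]. intros [|n].
  - unfold Es. simpl. rewrite Rinv_1, Rabs_R1. lra.
  - destruct (Es_le (S n)) as [H1 H2]; [lia|]. rewrite Rabs_right by lra. rewrite pow1. lra.
Qed.

Lemma mult_bb_bound n : Rabs (PS_mult bb bb n) <= 1 * 4 ^ n.
Proof.
  unfold PS_mult. eapply Rle_trans; [apply sum_f_R0_triangle|].
  apply Rle_trans with (sum_f_R0 (fun _ => 2 ^ n) n).
  - apply sum_Rle. intros k Hk. rewrite Rabs_mult.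
    replace (2 ^ n) with (2 ^ k * 2 ^ (n - k)) by (rewrite <- pow_add; f_equal; lia).
    apply Rmult_le_compat; try apply Rabs_pos; apply bb_bound.
  - rewrite sum_cte. replace 4 with (2 * 2) by ring. rewrite Rpow_mult_distr.
    assert (H := INR_le_pow2 n). assert (0 < 2 ^ n) by (apply pow_lt; lra). nra.
Qed.

Lemma ex_ps_add a b x : ex_pseries a x -> ex_pseries b x -> ex_pseries (fun n => a n + b n) x.
Proof. intros. apply (ex_pseries_ext (PS_plus a b)); [intros; reflexivity|apply ex_pseries_plus; auto]. Qed.

Lemma ex_ps_sub a b x : ex_pseries a x -> ex_pseries b x -> ex_pseries (fun n => a n - b n) x.
Proof. intros. apply (ex_pseries_ext (PS_minus a b)); [intros; reflexivity|apply ex_pseries_minus; auto]. Qed.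

Lemma rad_sh a : CV_radius (sh a) = CV_radius a.
Proof.
  rewrite <- (CV_radius_incr_1 a). apply CV_radius_ext. intros [|n]; reflexivity.
Qed.

Lemma rad_ind0 : Rbar_le (Finite (/ 1)) (CV_radius (fun n => if Nat.eqb n 0 then 1 else 0)).
Proof.
  apply (rad_bound _ 1); [lra|]. intros [|n]; simpl; rewrite ?Rabs_R1, ?Rabs_R0, ?pow1; lra.
Qed.

Lemma rad_mult_bb : Rbar_le (Finite (/ 4)) (CV_radius (PS_mult bb bb)).
Proof. apply (rad_bound _ 1); [lra|]. apply mult_bb_bound. Qed.

Lemma GE1 t : Rabs t < / 2 -> PSeries bb t * PSeries Es t = 1.
Proof.
  intros Ht. rewrite <- PSeries_mult.
  - rewrite (PSeries_ext _ (fun n => if Nat.eqb n 0 then 1 else 0)) by apply bb_Es_conv.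
    apply PSeries_ind0.
  - eapply rad_lt; [apply rad_bb|lra].
  - eapply rad_lt; [apply rad_Es|lra].
Qed.

Lemma tDE t : Rabs t < / 1 -> t * Derive (PSeries Es) t = 1 + t * PSeries Es t - PSeries Es t.
Proof.
  intros Ht. rewrite Derive_PSeries by (eapply rad_lt; [apply rad_Es|lra]).
  rewrite <- PSeries_sh, <- PSeries_sh.
  rewrite (PSeries_ext (sh (PS_derive Es))
            (fun n => ((if Nat.eqb n 0 then 1 else 0) + sh Es n) - Es n)).
  - rewrite PS_sub, PS_add, PSeries_ind0; [ring| | | |].
    + eapply ex_ps; [apply rad_ind0|lra].
    + eapply ex_ps; [rewrite rad_sh; apply rad_Es|lra].
    + apply ex_ps_add; [eapply ex_ps; [apply rad_ind0|lra]|eapply ex_ps; [rewrite rad_sh; apply rad_Es|lra]].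
    + eapply ex_ps; [apply rad_Es|lra].
  - intros [|m]; unfold sh, PS_derive, Es; simpl Nat.eqb.
    + change (fact 1) with 1%nat. rewrite INR_1. field.
    + rewrite (fact_simpl (S m)), mult_INR.
      assert (H1 := INR_fact_pos (S m)). assert (0 < INR (S (S m))) by (apply lt_0_INR; lia).
      rewrite (S_INR (S m)). rewrite S_INR in *. assert (0 <= INR m) by apply pos_INR. field. split; lra.
Qed.

Lemma riccati_fun t : Rabs t < / 4 ->
  PSeries (fun n => INR n * bb n) t =
  PSeries (fun n => bb n - sh bb n - PS_mult bb bb n) t.
Proof.
  intros Ht.
  assert (Hb : Rbar_lt (Rabs t) (CV_radius bb)) by (eapply rad_lt; [apply rad_bb|lra]).
  assert (He : Rbar_lt (Rabs t) (CV_radius Es)) by (eapply rad_lt; [apply rad_Es|lra]).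
  set (G := PSeries bb t). set (E := PSeries Es t).
  set (DG := PSeries (PS_derive bb) t). set (DE := Derive (PSeries Es) t).
  assert (H1 : G * E = 1) by (apply GE1; lra).
  assert (H3 : t * DE = 1 + t * E - E) by (apply tDE; lra).
  assert (H2 : DG * E + G * DE = 0).
  { assert (Hd : is_derive (fun s => PSeries bb s * PSeries Es s) t (DG * E + G * DE)).
    { apply (is_derive_mult (fun s => PSeries bb s) (fun s => PSeries Es s) t DG DE).
      - apply is_derive_PSeries; auto.
      - unfold DE. rewrite Derive_PSeries by auto. apply is_derive_PSeries; auto.
      - intros; apply Rmult_comm. }
    apply is_derive_unique in Hd. rewrite <- Hd.
    rewrite (Derive_ext_loc _ (fun _ => 1)).
    - apply Derive_const.
    - apply (locally_of t (/2 - Rabs t)); [lra|].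
      intros s Hs. apply GE1.
      assert (Rabs s <= Rabs t + Rabs (s - t)).
      { replace s with (t + (s - t)) at 1 by ring. apply Rabs_triang. }
      lra. }
  assert (Hric : t * DG = G - t * G - G * G).
  { assert (E1 : t * DG = G * (t * DG * E)) by (transitivity (t * DG * (G * E)); [rewrite H1; ring| ring]).
    assert (E2 : t * DG * E = - G * (t * DE)).
    { transitivity (t * (DG * E + G * DE) - G * (t * DE)); [ring|]. rewrite H2. ring. }
    rewrite E1, E2, H3.
    transitivity (- G * G - t * G * (G * E) + G * (G * E)); [ring|]. rewrite H1. ring. }
  rewrite (PSeries_ext _ (sh (PS_derive bb))).
  2:{ intros [|n]; unfold sh, PS_derive; simpl; ring. }
  rewrite PSeries_sh. fold DG.
  assert (Hm : Rbar_lt (Rabs t) (CV_radius (PS_mult bb bb))) by (eapply rad_lt; [apply rad_mult_bb|lra]).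
  assert (X1 : ex_pseries bb t) by (apply CV_radius_inside; auto).
  assert (X2 : ex_pseries (sh bb) t) by (apply CV_radius_inside; rewrite rad_sh; auto).
  assert (X3 : ex_pseries (PS_mult bb bb) t) by (apply CV_radius_inside; auto).
  rewrite PS_sub, PS_sub, PSeries_sh, PSeries_mult; auto.
  apply ex_ps_sub; auto.
Qed.

Lemma riccati_seq n : INR n * bb n = bb n - sh bb n - PS_mult bb bb n.
Proof.
  apply (PSeries_ext_recip (fun n => INR n * bb n) (fun n => bb n - sh bb n - PS_mult bb bb n)).
  - rewrite (CV_radius_ext _ (sh (PS_derive bb))).
    + rewrite rad_sh, CV_radius_derive. eapply Rbar_lt_le_trans; [|apply rad_bb]. simpl; lra.
    + intros [|m]; unfold sh, PS_derive; simpl; ring.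
  - eapply Rbar_lt_le_trans; [|apply (rad_bound _ 3 4)]; [simpl; lra|lra|].
    intros m. unfold Rminus. eapply Rle_trans; [apply Rabs_triang|].
    rewrite Rabs_Ropp. eapply Rle_trans; [apply Rplus_le_compat_r, Rabs_triang|].
    rewrite Rabs_Ropp.
    assert (A1 := bb_bound m). assert (A2 := mult_bb_bound m).
    assert (A3 : Rabs (sh bb m) <= 2 ^ m).
    { destruct m; simpl; [rewrite Rabs_R0; lra|]. assert (H := bb_bound m). assert (0 < 2 ^ m) by (apply pow_lt; lra). lra. }
    assert (2 ^ m <= 4 ^ m) by (apply pow_incr; lra). lra.
  - apply (locally_of 0 (/4)); [lra|]. intros t Ht. apply riccati_fun. rewrite Rminus_0_r in Ht. exact Ht.
Qed.

Lemma sum_ind (i N : nat) (v : R) : (i <= N)%nat ->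
  sum_f_R0 (fun j => if Nat.eqb j i then v else 0) N = v.
Proof.
  induction N; intros Hi.
  - assert (i = 0%nat) by lia; subst. reflexivity.
  - rewrite sum_shift_last. destruct (Nat.eq_dec i (S N)) as [->|Hne].
    + rewrite Nat.eqb_refl.
      rewrite (sum_eq _ (fun _ => 0)).
      * rewrite sum_cte. ring.
      * intros j Hj. destruct (Nat.eqb_spec j (S N)); [lia|reflexivity].
    + rewrite IHN by lia. destruct (Nat.eqb_spec (S N) i); [lia|ring].
Qed.

Lemma sum_scal_l (c : R) (f : nat -> R) N : sum_f_R0 (fun j => c * f j) N = c * sum_f_R0 f N.
Proof. induction N; simpl; [ring|rewrite IHN; ring]. Qed.

Lemma bb0 : bb 0 = 1.
Proof. unfold bb, bernoulli. simpl. field. Qed.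

Lemma bb1 : bb 1 = - / 2.
Proof. unfold bb. rewrite bern_rec. simpl. unfold Binomial.C. simpl. unfold bernoulli. simpl. field. Qed.

Lemma bb2 : bb 2 = / 12.
Proof. unfold bb. rewrite (proj1 bernoulli_sanity). simpl. field. Qed.

Lemma conv_eq n : PS_mult bb bb n = (1 - INR n) * bb n - sh bb n.
Proof. assert (H := riccati_seq n). lra. Qed.

Lemma bb_odd_aux k : forall i, (1 <= i <= k)%nat -> bb (2 * i + 1) = 0.
Proof.
  induction k; intros i Hi; [lia|].
  destruct (Nat.eq_dec i (S k)); [|apply IHk; lia]. subst i.
  set (N := (2 * S k + 1)%nat).
  assert (HN3 : (3 <= N)%nat) by (unfold N; lia).
  assert (Hc := conv_eq N). unfold PS_mult in Hc.
  set (c := bb 1 * bb (N - 1)).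
  rewrite (sum_eq _ (fun j => ((if Nat.eqb j 0 then bb N else 0) + (if Nat.eqb j N then bb N else 0))
                 + ((if Nat.eqb j 1 then c else 0) + (if Nat.eqb j (N - 1) then c else 0)))) in Hc.
  2:{ intros j Hj.
      destruct (Nat.eqb_spec j 0) as [->|H0].
      { rewrite bb0, Nat.sub_0_r. destruct (Nat.eqb_spec 0 N); [lia|].
        destruct (Nat.eqb_spec 0 1); [lia|]. destruct (Nat.eqb_spec 0 (N-1)); [lia|]. ring. }
      destruct (Nat.eqb_spec j N) as [->|HN].
      { rewrite Nat.sub_diag, bb0. destruct (Nat.eqb_spec N 1); [lia|].
        destruct (Nat.eqb_spec N (N-1)); [lia|]. ring. }
      destruct (Nat.eqb_spec j 1) as [->|H1].
      { destruct (Nat.eqb_spec 1 (N-1)); [lia|]. unfold c. ring. }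
      destruct (Nat.eqb_spec j (N-1)) as [->|H2].
      { replace (N - (N - 1))%nat with 1%nat by lia. unfold c. ring. }
      destruct (Nat.Even_or_Odd j) as [[a Ha]|[a Ha]].
      - assert (N - j = 2 * (S k - a) + 1)%nat by (unfold N in *; lia).
        rewrite H, (IHk (S k - a)%nat) by (unfold N in *; lia). ring.
      - subst j. rewrite (IHk a) by (unfold N in *; lia). ring. }
  rewrite !plus_sum, !sum_ind in Hc by lia.
  unfold c in Hc. rewrite bb1 in Hc.
  assert (Hsh : sh bb N = bb (N - 1)) by (unfold N; simpl; f_equal; lia).
  rewrite Hsh in Hc.
  assert (HNpos : 0 < INR N + 1) by (assert (0 <= INR N) by apply pos_INR; lra).
  assert ((INR N + 1) * bb N = 0) by lra.
  fold N. destruct (Rmult_integral _ _ H); [lra|auto].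
Qed.

Lemma bb_odd i : (1 <= i)%nat -> bb (2 * i + 1) = 0.
Proof. intros. apply (bb_odd_aux i); lia. Qed.

Fixpoint ip (n : nat) : R :=
  match n with O => 1 | S O => 0 | S (S m) => - ip m end.

Lemma ip_even a : ip (2 * a) = (-1) ^ a.
Proof.
  induction a; [reflexivity|]. replace (2 * S a)%nat with (S (S (2 * a))) by lia.
  change (ip (S (S (2 * a)))) with (- ip (2 * a)). rewrite IHa. simpl. ring.
Qed.

Lemma ip_odd a : ip (2 * a + 1) = 0.
Proof.
  induction a; [reflexivity|]. replace (2 * S a + 1)%nat with (S (S (2 * a + 1))) by lia.
  change (ip (S (S (2 * a + 1)))) with (- ip (2 * a + 1)). rewrite IHa. ring.
Qed.

Definition ee (n : nat) : R := if Nat.eqb n 0 then 0 else - ip n * 2 ^ n * bb n.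

Lemma ee0 : ee 0 = 0.
Proof. reflexivity. Qed.

Lemma ee_odd a : ee (2 * a + 1) = 0.
Proof. unfold ee. destruct (Nat.eqb_spec (2 * a + 1) 0); [lia|]. rewrite ip_odd. ring. Qed.

Lemma ee2 : ee 2 = / 3.
Proof. unfold ee. simpl Nat.eqb. rewrite bb2. simpl. field. Qed.

Lemma ee_even_pos_form k : (1 <= k)%nat -> ee (2 * k) = - (-1) ^ k * 4 ^ k * bb (2 * k).
Proof.
  intros Hk. unfold ee. destruct (Nat.eqb_spec (2 * k) 0); [lia|].
  rewrite ip_even, pow_mult. replace (2 ^ 2) with 4 by ring. ring.
Qed.

Definition ind2 (n : nat) : R := if Nat.eqb n 2 then 1 else 0.

Lemma ee_rec n : INR n * ee n = ind2 n + PS_mult ee ee n - ee n.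
Proof.
  unfold PS_mult.
  destruct (Nat.Even_or_Odd n) as [[k Hk]|[k Hk]]; subst n.
  - destruct k as [|[|k]].
    + simpl. unfold ind2, ee. simpl. ring.
    + simpl (2 * 1)%nat. unfold ind2. simpl Nat.eqb. simpl sum_f_R0.
      rewrite ee0, ee2. replace (ee 1) with 0 by (symmetry; apply (ee_odd 0)).
      simpl. field.
    + set (n := (2 * S (S k))%nat).
      assert (Hn4 : (4 <= n)%nat) by (unfold n; lia).
      set (s := ip n * 2 ^ n).
      assert (Hen : ee n = - s * bb n).
      { unfold ee, s. destruct (Nat.eqb_spec n 0); [lia|]. ring. }
      rewrite (sum_eq _ (fun j => s * (bb j * bb (n - j)) +
             ((if Nat.eqb j 0 then ee n else 0) + (if Nat.eqb j n then ee n else 0)))).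
      2:{ intros j Hj.
          destruct (Nat.eqb_spec j 0) as [->|H0].
          { rewrite ee0, bb0, Nat.sub_0_r, Hen. destruct (Nat.eqb_spec 0 n); [lia|]. ring. }
          destruct (Nat.eqb_spec j n) as [->|HN].
          { rewrite Nat.sub_diag, ee0, bb0, Hen. ring. }
          destruct (Nat.Even_or_Odd j) as [[a Ha]|[a Ha]].
          - rewrite Rplus_0_r, Rplus_0_r.
            set (b := (S (S k) - a)%nat).
            assert (Hnj : (n - j = 2 * b)%nat) by (unfold b, n in *; lia).
            assert (Hnab : n = (2 * (a + b))%nat) by (unfold b, n in *; lia).
            rewrite Hnj, Ha, !ee_even_pos_form by (unfold b, n in *; lia).
            unfold s. rewrite Hnab, ip_even, pow_mult, !pow_add. replace (2 ^ 2) with 4 by ring.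
            ring.
          - assert (Hnj : (n - j = 2 * (S k - a) + 1)%nat) by (unfold n in *; lia).
            rewrite Hnj, Ha, ee_odd.
            destruct (Nat.eq_dec a 0) as [->|Ha0].
            + rewrite (bb_odd (S k - 0)) by lia. ring.
            + rewrite (bb_odd a) by lia. ring. }
      rewrite plus_sum, plus_sum, sum_scal_l, !sum_ind by lia.
      fold (PS_mult bb bb n). rewrite conv_eq.
      assert (Hsh : sh bb n = 0).
      { unfold n. simpl sh. replace (S (k + S (S (k + 0)))) with (2 * (S k) + 1)%nat by lia.
        apply bb_odd; lia. }
      rewrite Hsh. unfold ind2. destruct (Nat.eqb_spec n 2); [lia|].
      rewrite Hen. ring.
  - rewrite ee_odd. unfold ind2. destruct (Nat.eqb_spec (2 * k + 1) 2); [lia|].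
    rewrite (sum_eq _ (fun _ => 0)).
    + rewrite sum_cte. ring.
    + intros j Hj. destruct (Nat.Even_or_Odd j) as [[a Ha]|[a Ha]].
      * assert (2 * k + 1 - j = 2 * (k - a) + 1)%nat by lia. rewrite H, ee_odd. ring.
      * rewrite Ha, ee_odd. ring.
Qed.

Lemma sum_nonneg_b (f : nat -> R) N : (forall j, (j <= N)%nat -> 0 <= f j) -> 0 <= sum_f_R0 f N.
Proof.
  intros H. apply Rle_trans with (sum_f_R0 (fun _ => 0) N).
  - rewrite sum_cte; lra.
  - apply sum_Rle. auto.
Qed.

Lemma sum_ge_term (f : nat -> R) N i : (forall j, (j <= N)%nat -> 0 <= f j) -> (i <= N)%nat ->
  f i <= sum_f_R0 f N.
Proof.
  induction N; intros Hf Hi.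
  - assert (i = 0%nat) by lia; subst; simpl; lra.
  - rewrite sum_shift_last. destruct (Nat.eq_dec i (S N)) as [->|].
    + assert (0 <= sum_f_R0 f N) by (apply sum_nonneg_b; intros; apply Hf; lia). lra.
    + assert (f i <= sum_f_R0 f N) by (apply IHN; [intros; apply Hf; lia|lia]).
      assert (0 <= f (S N)) by (apply Hf; lia). lra.
Qed.

Definition qq : R := 3 / 5.

Lemma ee_bound_aux n : forall m, (m <= n)%nat -> 0 <= ee m <= qq ^ m.
Proof.
  induction n; intros m Hm.
  - assert (m = 0%nat) by lia; subst. rewrite ee0. simpl. lra.
  - destruct (Nat.eq_dec m (S n)) as [->|]; [|apply IHn; lia].
    destruct (Compare_dec.le_lt_dec (S n) 2) as [Hs|Hs].
    + destruct n as [|[|n]]; [|unfold qq; rewrite ee2; simpl; lra|lia].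
      replace (ee 1) with 0 by (symmetry; apply (ee_odd 0)). unfold qq; simpl; lra.
    + assert (Hr := ee_rec (S n)).
      unfold ind2 in Hr. destruct (Nat.eqb_spec (S n) 2); [lia|].
      assert (Hc : 0 <= PS_mult ee ee (S n) <= INR (S (S n)) * qq ^ (S n)).
      { unfold PS_mult. split.
        - apply sum_nonneg_b. intros j Hj.
          destruct (Nat.eq_dec j 0) as [->|]; [rewrite ee0; lra|].
          destruct (Compare_dec.le_lt_dec j n).
          + destruct (IHn j) as [A1 A2]; [lia|].
            destruct (Compare_dec.le_lt_dec (S n - j) 0).
            * replace (S n - j)%nat with 0%nat by lia. rewrite ee0; lra.
            * destruct (IHn (S n - j)%nat) as [B1 B2]; [lia|]. apply Rmult_le_pos; auto.
          + destruct (Nat.eq_dec j (S n)) as [->|].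
            * rewrite Nat.sub_diag, ee0; lra.
            * replace (S n - j)%nat with 0%nat by lia. rewrite ee0; lra.
        - rewrite Rmult_comm, <- sum_cte. apply sum_Rle. intros j Hj.
          assert (0 < qq) by (unfold qq; lra).
          destruct (Nat.eq_dec j 0) as [->|]; [rewrite ee0; rewrite Rmult_0_l; apply pow_le; lra|].
          destruct (Nat.eq_dec j (S n)) as [->|]; [rewrite Nat.sub_diag, ee0, Rmult_0_r; apply pow_le; lra|].
          destruct (IHn j) as [A1 A2]; [lia|].
          destruct (IHn (S n - j)%nat) as [B1 B2]; [lia|].
          replace (qq ^ S n) with (qq ^ j * qq ^ (S n - j)) by (rewrite <- pow_add; f_equal; lia).
          apply Rmult_le_compat; auto. }
      assert (HN : 0 < INR (S (S n))) by (apply lt_0_INR; lia).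
      rewrite S_INR in HN, Hc.
      assert (Heq : (INR (S n) + 1) * ee (S n) = PS_mult ee ee (S n)) by lra.
      split.
      * apply (Rmult_le_reg_l (INR (S n) + 1)); lra.
      * apply (Rmult_le_reg_l (INR (S n) + 1)); lra.
Qed.

Lemma ee_bound n : 0 <= ee n <= qq ^ n.
Proof. apply (ee_bound_aux n); lia. Qed.

Lemma ee_even_pos k : (1 <= k)%nat -> 0 < ee (2 * k).
Proof.
  induction k; intros Hk; [lia|].
  destruct (Nat.eq_dec k 0) as [->|]; [simpl; rewrite ee2; lra|].
  assert (IH := IHk ltac:(lia)).
  assert (Hr := ee_rec (2 * S k)).
  unfold ind2 in Hr. destruct (Nat.eqb_spec (2 * S k) 2); [lia|].
  assert (Ht : ee 2 * ee (2 * S k - 2) <= PS_mult ee ee (2 * S k)).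
  { unfold PS_mult. apply (sum_ge_term (fun j => ee j * ee (2 * S k - j))).
    - intros j _. apply Rmult_le_pos; apply ee_bound.
    - lia. }
  replace (2 * S k - 2)%nat with (2 * k)%nat in Ht by lia.
  rewrite ee2 in Ht.
  assert (HN : 0 < INR (2 * S k) + 1) by (assert (0 <= INR (2 * S k)) by apply pos_INR; lra).
  assert (0 < / 3 * ee (2 * k)) by (apply Rmult_lt_0_compat; lra).
  apply (Rmult_lt_reg_l (INR (2 * S k) + 1)); lra.
Qed.

Lemma rad_ee : Rbar_le (Finite (5 / 3)) (CV_radius ee).
Proof.
  replace (5 / 3) with (/ qq) by (unfold qq; field).
  apply (rad_bound _ 1); [unfold qq; lra|].
  intros n. destruct (ee_bound n). rewrite Rabs_right by lra. lra.
Qed.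

Lemma PI2_lt : PI / 2 < 8 / 5.
Proof.
  destruct (Rlt_or_le (PI / 2) (8 / 5)) as [|H]; auto.
  exfalso.
  assert (Hpi := PI_RGT_0).
  destruct (cos_bound (8 / 5) 0) as [_ H2]; [lra|lra|].
  assert (H3 := cos_ge_0 (8 / 5) ltac:(lra) H).
  unfold cos_approx, cos_term in H2. simpl in H2. lra.
Qed.

Definition Y (x : R) : R := PSeries ee x.
Definition DY (x : R) : R := PSeries (PS_derive ee) x.

Lemma rad_ind2 : Rbar_le (Finite (/ (1/2))) (CV_radius ind2).
Proof.
  apply (rad_bound _ 4); [lra|]. intros n. unfold ind2.
  destruct (Nat.eqb_spec n 2) as [->|]; simpl.
  - rewrite Rabs_R1. lra.
  - rewrite Rabs_R0. apply Rmult_le_pos; [lra|apply pow_le; lra].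
Qed.

Lemma PSeries_ind2 x : Rabs x < 2 -> PSeries ind2 x = x ^ 2.
Proof.
  intros Hx. rewrite (PSeries_decr_n _ 2).
  - rewrite (PSeries_ext _ (fun _ => 0)).
    + rewrite PSeries_const_0. unfold ind2. simpl. ring.
    + intros k. unfold PS_decr_n, ind2. destruct (Nat.eqb_spec (S (S (S k))) 2); [lia|reflexivity].
  - eapply ex_ps; [apply rad_ind2|lra].
Qed.

Lemma Y_is_derive x : Rabs x < 5 / 3 -> is_derive Y x (DY x).
Proof. intros. apply is_derive_PSeries. eapply rad_lt; [apply rad_ee|lra]. Qed.

Lemma Y_ode x : Rabs x < 5 / 3 -> x * DY x = x ^ 2 + Y x * Y x - Y x.
Proof.
  intros Hx.
  assert (Hr : Rbar_lt (Rabs x) (CV_radius ee)) by (eapply rad_lt; [apply rad_ee|lra]).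
  unfold DY. rewrite <- PSeries_sh.
  rewrite (PSeries_ext _ (fun n => ind2 n + PS_mult ee ee n - ee n)).
  2:{ intros n. rewrite <- ee_rec. destruct n; unfold sh, PS_derive; simpl; ring. }
  assert (Hm : is_pseries (PS_mult ee ee) x (Y x * Y x)).
  { apply is_pseries_mult; auto; apply PSeries_correct, CV_radius_inside; auto. }
  assert (X1 : ex_pseries ind2 x) by (eapply ex_ps; [apply rad_ind2|lra]).
  assert (X2 : ex_pseries (PS_mult ee ee) x) by (eexists; exact Hm).
  assert (X3 : ex_pseries ee x) by (apply CV_radius_inside; auto).
  rewrite PS_sub, PS_add, PSeries_ind2; auto.
  - rewrite (is_pseries_unique _ _ _ Hm). reflexivity.
  - lra.
  - apply ex_ps_add; auto.
Qed.

Definition Pf (x : R) : R := (1 - Y x) * sin x - x * cos x.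
Definition dP (x : R) : R := - DY x * sin x + (1 - Y x) * cos x - (cos x - x * sin x).

Lemma Pf_derive x : Rabs x < 5 / 3 -> is_derive Pf x (dP x).
Proof.
  intros Hx. unfold Pf.
  assert (HY := Y_is_derive x Hx).
  auto_derive.
  - eexists; exact HY.
  - change (fun x0 : R => Y x0) with Y. rewrite (is_derive_unique _ _ _ HY). unfold dP. ring.
Qed.

Lemma x_dP x : 0 < x < 5 / 3 -> x * dP x = Y x * Pf x.
Proof.
  intros Hx. assert (H := Y_ode x ltac:(rewrite Rabs_right; lra)).
  unfold dP, Pf.
  replace (x * (- DY x * sin x + (1 - Y x) * cos x - (cos x - x * sin x)))
    with (- (x * DY x) * sin x + x * ((1 - Y x) * cos x - (cos x - x * sin x))) by ring.
  rewrite H. ring.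
Qed.

Lemma PSeries_as_Series a x : PSeries a x = Series (fun n => a n * x ^ n).
Proof.
  rewrite PSeries_eq. apply Series_ext. intros n. rewrite pow_n_pow.
  change (scal (x ^ n) (a n)) with (x ^ n * a n). ring.
Qed.

Lemma Y_le x X : 0 < x -> x < X -> X < 8 / 5 -> Y x <= (qq / (1 - qq * X)) * x.
Proof.
  intros H0 H1 H2.
  assert (Hq : 0 < qq * x < 1) by (unfold qq; split; nra).
  assert (HqX : qq * x < qq * X < 1) by (unfold qq; split; nra).
  unfold Y. rewrite PSeries_decr_1_aux by apply ee0.
  rewrite Rmult_comm. apply Rmult_le_compat_r; [lra|].
  rewrite PSeries_as_Series.
  apply Rle_trans with (Series (fun n => qq * (qq * x) ^ n)).
  - apply Series_le.
    + intros n. unfold PS_decr_1. destruct (ee_bound (S n)) as [A1 A2].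
      split. apply Rmult_le_pos; [auto|apply pow_le; lra].
      rewrite Rpow_mult_distr. replace (qq * (qq ^ n * x ^ n)) with (qq ^ (S n) * x ^ n) by (simpl; ring).
      apply Rmult_le_compat_r; [apply pow_le; lra|auto].
    + exists (qq * / (1 - qq * x)).
      apply (is_series_scal_l qq (fun n => (qq * x) ^ n)). apply is_series_geom.
      rewrite Rabs_right; lra.
  - rewrite Series_scal_l, Series_geom by (rewrite Rabs_right; lra).
    apply Rmult_le_compat_l; [unfold qq; lra|].
    apply Rinv_le_contravar; lra.
Qed.

Lemma Pf0 : Pf 0 = 0.
Proof. unfold Pf. rewrite sin_0. ring. Qed.

Lemma Pf_zero X : 0 < X < 8 / 5 -> Pf X = 0.
Proof.
  intros HX.
  set (M := qq / (1 - qq * X)).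
  assert (HM : 0 < M) by (unfold M, qq; apply Rdiv_lt_0_compat; nra).
  set (Q := fun t => Pf t ^ 2 * exp (- (2 * M) * t)).
  set (dQ := fun t => (2 * Pf t * dP t - 2 * M * Pf t ^ 2) * exp (- (2 * M) * t)).
  assert (Hd : forall c, 0 <= c <= X -> derivable_pt_lim Q c (dQ c)).
  { intros c Hc. apply is_derive_Reals.
    assert (HP := Pf_derive c ltac:(rewrite Rabs_right; lra)).
    unfold Q. auto_derive.
    - eexists; exact HP.
    - change (fun x0 : R => Pf x0) with Pf. rewrite (is_derive_unique _ _ _ HP). unfold dQ. ring. }
  destruct (MVT_cor2 Q dQ 0 X ltac:(lra) Hd) as [c [Hc1 Hc2]].
  assert (HQ0 : Q 0 = 0) by (unfold Q; rewrite Pf0; ring).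
  assert (HdQ : dQ c <= 0).
  { unfold dQ. assert (He := exp_pos (- (2 * M) * c)).
    assert (Hc : c * (2 * Pf c * dP c - 2 * M * Pf c ^ 2) = 2 * Pf c ^ 2 * (Y c - M * c)).
    { replace (c * (2 * Pf c * dP c - 2 * M * Pf c ^ 2)) with (2 * Pf c * (c * dP c) - 2 * M * c * Pf c ^ 2) by ring.
      rewrite x_dP by lra. ring. }
    assert (HY := Y_le c X ltac:(lra) ltac:(lra) ltac:(lra)). fold M in HY.
    assert (0 <= Pf c ^ 2) by (apply pow2_ge_0).
    assert (c * (2 * Pf c * dP c - 2 * M * Pf c ^ 2) <= 0) by (rewrite Hc; nra).
    assert (2 * Pf c * dP c - 2 * M * Pf c ^ 2 <= 0) by nra.
    nra. }
  assert (HQX : Q X <= 0) by nra.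
  unfold Q in HQX. assert (He := exp_pos (- (2 * M) * X)).
  assert (Pf X ^ 2 <= 0) by nra.
  assert (Pf X ^ 2 = 0) by (assert (0 <= Pf X ^ 2) by apply pow2_ge_0; lra).
  nra.
Qed.

Definition cc (n : nat) : R := (INR n - 2) * ee n.

Lemma cc_nonneg n : 0 <= cc n.
Proof.
  unfold cc. destruct n as [|[|[|n]]].
  - rewrite ee0. lra.
  - replace (ee 1) with 0 by (symmetry; apply (ee_odd 0)). lra.
  - simpl. replace (1 + 1 - 2) with 0 by ring. lra.
  - apply Rmult_le_pos; [|apply ee_bound]. rewrite !S_INR. assert (0 <= INR n) by apply pos_INR. lra.
Qed.

Lemma cc_odd a : cc (2 * a + 1) = 0.
Proof. unfold cc. rewrite ee_odd. ring. Qed.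

Lemma cc_even_pos k : (2 <= k)%nat -> 0 < cc (2 * k).
Proof.
  intros Hk. unfold cc. apply Rmult_lt_0_compat; [|apply ee_even_pos; lia].
  assert (2 * 2 <= INR (2 * k)) by (rewrite mult_INR; simpl; assert (2 <= INR k) by (apply (le_INR 2); lia); lra).
  lra.
Qed.

Lemma ex_cc x : Rabs x < 5 / 3 -> ex_pseries cc x.
Proof.
  intros Hx.
  assert (Hr : Rbar_lt (Rabs x) (CV_radius ee)) by (eapply rad_lt; [apply rad_ee|lra]).
  apply (ex_pseries_ext (fun n => sh (PS_derive ee) n - 2 * ee n)).
  - intros [|n]; unfold cc, sh, PS_derive; simpl; ring.
  - apply ex_ps_sub.
    + apply CV_radius_inside. rewrite rad_sh, CV_radius_derive. auto.
    + apply (ex_pseries_ext (PS_scal 2 ee)); [intros; reflexivity|].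
      apply ex_pseries_scal; [apply Rmult_comm|]. apply CV_radius_inside; auto.
Qed.

Lemma H_eq x : Rabs x < 5 / 3 -> PSeries cc x = x * DY x - 2 * Y x.
Proof.
  intros Hx.
  assert (Hr : Rbar_lt (Rabs x) (CV_radius ee)) by (eapply rad_lt; [apply rad_ee|lra]).
  rewrite (PSeries_ext _ (fun n => sh (PS_derive ee) n - PS_scal 2 ee n)).
  2:{ intros [|n]; unfold cc, sh, PS_derive, PS_scal; simpl; change (scal 2 (ee ?k)) with (2 * ee k); ring. }
  rewrite PS_sub, PSeries_sh, PSeries_scal.
  - reflexivity.
  - apply CV_radius_inside. rewrite rad_sh, CV_radius_derive. auto.
  - apply (ex_pseries_ext (PS_scal 2 ee)); [intros; reflexivity|].
    apply ex_pseries_scal; [apply Rmult_comm|]. apply CV_radius_inside; auto.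
Qed.

Lemma Series_zero : Series (fun _ => 0) = 0.
Proof.
  rewrite (Series_ext _ (fun n => 0 * 1)) by (intros; ring).
  rewrite Series_scal_l. ring.
Qed.

Lemma Series_nonneg v : (forall n, 0 <= v n) -> ex_series v -> 0 <= Series v.
Proof.
  intros H Hv. rewrite <- Series_zero. apply Series_le; auto. intros; split; [lra|auto].
Qed.

Lemma Series_ge_term v j : (forall n, 0 <= v n) -> ex_series v -> v j <= Series v.
Proof.
  intros H Hv. rewrite (Series_incr_n v (S j)); [|lia|auto].
  simpl Nat.pred.
  assert (0 <= Series (fun k => v (S j + k)%nat)).
  { apply Series_nonneg; auto. apply (ex_series_incr_n v (S j)). auto. }
  assert (v j <= sum_f_R0 v j) by (apply sum_ge_term; auto).
  lra.
Qed.

Lemma ex_u x : Rabs x < 5 / 3 -> ex_series (fun n => cc n * x ^ n).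
Proof.
  intros Hx. apply (ex_series_ext (fun k => scal (pow_n x k) (cc k))).
  - intros n. rewrite pow_n_pow. change (scal (x ^ n) (cc n)) with (x ^ n * cc n). apply Rmult_comm.
  - apply ex_cc; auto.
Qed.

Lemma a_coef_cc k : (1 <= k)%nat -> a_coef k = cc (2 * k).
Proof.
  intros Hk. unfold a_coef, cc.
  assert (He : ee (2 * k) = 4 ^ k * Rabs (bernoulli (2 * k)) / INR (fact (2 * k))).
  { assert (Hp := ee_even_pos k Hk).
    rewrite <- (Rabs_right (ee (2 * k))) by lra.
    rewrite ee_even_pos_form by auto. unfold bb.
    rewrite !Rabs_mult, Rabs_Ropp, pow_1_abs, Rabs_right by (apply Rle_ge, pow_le; lra).
    unfold Rdiv. rewrite Rabs_mult, Rabs_inv, (Rabs_right (INR _)) by (apply Rle_ge, pos_INR). ring. }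
  rewrite He, minus_INR by lia. simpl (INR 2). field.
  apply Rgt_not_eq, INR_fact_pos.
Qed.

Lemma sum_from2_eq (x : R) M : (1 <= M)%nat ->
  sum_from2 M (fun k => a_coef k * x ^ (2 * k)) = sum_f_R0 (fun n => cc n * x ^ n) (2 * M + 1).
Proof.
  intros HM. destruct M as [|M]; [lia|]. unfold sum_from2.
  replace (S M - 1)%nat with M by lia. clear HM.
  induction M.
  - simpl. unfold cc. rewrite ee0. replace (ee 1) with 0 by (symmetry; apply (ee_odd 0)).
    replace (ee 3) with 0 by (symmetry; apply (ee_odd 1)). simpl. ring.
  - rewrite seq_S, map_app, fold_right_app, fold_plus_acc, IHM.
    replace (2 * S (S M) + 1)%nat with (S (S (2 * S M + 1))) by lia.
    rewrite !sum_shift_last.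
    replace (S (S (2 * S M + 1))) with (2 * (S (S M)) + 1)%nat by lia.
    rewrite cc_odd. cbn [map fold_right].
    replace (2 + M)%nat with (S (S M)) by lia.
    rewrite a_coef_cc by lia.
    replace (S (2 * S M + 1)) with (2 * S (S M))%nat by lia. ring.
Qed.

Lemma F_eq x : 0 < x < PI / 2 ->
  (x / sin x) ^ 2 + x / tan x = 2 + PSeries cc x.
Proof.
  intros Hx. assert (Hpi := PI2_lt).
  assert (Hs : 0 < sin x) by (apply sin_gt_0; lra).
  assert (Hc : 0 < cos x) by (apply cos_gt_0; lra).
  assert (HP := Pf_zero x ltac:(lra)). unfold Pf in HP.
  assert (Hxa : Rabs x < 5 / 3) by (rewrite Rabs_right; lra).
  rewrite H_eq by auto.
  assert (Hode := Y_ode x Hxa).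
  assert (Hsc : sin x ^ 2 + cos x ^ 2 = 1) by (rewrite <- (sin2_cos2 x); unfold Rsqr; ring).
  assert (Hxc : x * cos x = (1 - Y x) * sin x) by lra.
  assert (Hu : x * cos x / sin x = 1 - Y x) by (rewrite Hxc; field; lra).
  assert (Ht : x / tan x = 1 - Y x) by (unfold tan; rewrite <- Hu; field; split; lra).
  assert (Hq : (x / sin x) ^ 2 = x ^ 2 + (1 - Y x) ^ 2).
  { rewrite <- Hu. transitivity (x ^ 2 * (sin x ^ 2 + cos x ^ 2) / sin x ^ 2).
    - rewrite Hsc. field. lra.
    - field. lra. }
  rewrite Hq, Ht, Hode. ring.
Qed.

Lemma H_at_pi2 : PSeries cc (PI / 2) = PI ^ 2 / 4 - 2.
Proof.
  assert (Hpi := PI2_lt). assert (Hp := PI_RGT_0).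
  assert (HP := Pf_zero (PI / 2) ltac:(lra)). unfold Pf in HP.
  rewrite sin_PI2, cos_PI2 in HP.
  assert (HY : Y (PI / 2) = 1) by lra.
  assert (Hxa : Rabs (PI / 2) < 5 / 3) by (rewrite Rabs_right; lra).
  rewrite H_eq, Y_ode by auto. rewrite HY. field.
Qed.

Lemma pow_le_1' z k : 0 <= z <= 1 -> z ^ k <= 1.
Proof. intros. rewrite <- (pow1 k). apply pow_incr. lra. Qed.

Theorem theorem5 (x : R) (m : nat) :
  0 < x < PI / 2 -> (2 <= m)%nat ->
  2 + sum_from2 (m - 1) (fun k => a_coef k * x ^ (2 * k))
    + (2 * x / PI) ^ (2 * m)
      * (PI ^ 2 / 4 - 2 - sum_from2 (m - 1) (fun k => a_coef k * (PI / 2) ^ (2 * k)))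
  > (x / sin x) ^ 2 + x / tan x
  /\
  (x / sin x) ^ 2 + x / tan x
  > 2 + sum_from2 m (fun k => a_coef k * x ^ (2 * k)).
Proof.
  intros Hx Hm.
  assert (Hpi := PI2_lt). assert (Hp := PI_RGT_0).
  rewrite F_eq by auto.
  rewrite !sum_from2_eq by lia.
  replace (2 * (m - 1) + 1)%nat with (Nat.pred (2 * m)) by lia.
  set (X0 := PI / 2).
  set (u := fun n => cc n * x ^ n).
  set (w := fun n => cc n * X0 ^ n).
  assert (Hxa : Rabs x < 5 / 3) by (rewrite Rabs_right; lra).
  assert (HXa : Rabs X0 < 5 / 3) by (unfold X0; rewrite Rabs_right; lra).
  assert (Eu : ex_series u) by (apply ex_u; auto).
  assert (Ew : ex_series w) by (apply ex_u; auto).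
  assert (Hu : PSeries cc x = Series u) by apply PSeries_as_Series.
  assert (Hw : PI ^ 2 / 4 - 2 = Series w) by (rewrite <- H_at_pi2; apply PSeries_as_Series).
  rewrite Hu, Hw.
  split.
  - rewrite (Series_incr_n u (2 * m)), (Series_incr_n w (2 * m)); [|lia|auto|lia|auto].
    set (z := 2 * x / PI).
    assert (HzP : z * PI = 2 * x) by (unfold z; field; lra).
    assert (Hz : 0 < z < 1) by (split; nra).
    assert (Hxz : x = z * X0) by (unfold z, X0; field; lra).
    set (v := fun k => u (2 * m + k)%nat).
    set (t := fun k => w (2 * m + k)%nat).
    assert (Ev : ex_series v) by (apply (ex_series_incr_n u); auto).
    assert (Et : ex_series t) by (apply (ex_series_incr_n w); auto).
    assert (Hd : Series (fun k => z ^ (2 * m) * t k - v k) = z ^ (2 * m) * Series t - Series v).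
    { rewrite Series_minus; [rewrite Series_scal_l; reflexivity| |auto].
      apply (ex_series_ext (fun n => scal (z ^ (2 * m)) (t n))); [reflexivity|].
      apply (@ex_series_scal_l R_AbsRing R_NormedModule); auto. }
    assert (Hterm : forall k, z ^ (2 * m) * t k - v k =
              cc (2 * m + k) * z ^ (2 * m) * X0 ^ (2 * m + k) * (1 - z ^ k)).
    { intros k. unfold t, v, u, w. rewrite Hxz, Rpow_mult_distr, !pow_add. ring. }
    assert (Hpos : 0 < Series (fun k => z ^ (2 * m) * t k - v k)).
    { apply Rlt_le_trans with (z ^ (2 * m) * t 2%nat - v 2%nat).
      - rewrite Hterm.
        replace (2 * m + 2)%nat with (2 * S m)%nat by lia.
        assert (0 < cc (2 * S m)) by (apply cc_even_pos; lia).
        assert (0 < z ^ (2 * m)) by (apply pow_lt; lra).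
        assert (0 < X0 ^ (2 * S m)) by (apply pow_lt; unfold X0; lra).
        assert (z ^ 2 < 1) by (simpl; nra).
        apply Rmult_lt_0_compat; [|lra].
        apply Rmult_lt_0_compat; [|auto]. apply Rmult_lt_0_compat; auto.
      - apply (Series_ge_term (fun k => z ^ (2 * m) * t k - v k) 2%nat).
        + intros k. rewrite Hterm.
          assert (0 <= cc (2 * m + k)) by apply cc_nonneg.
          assert (0 <= z ^ (2 * m)) by (apply pow_le; lra).
          assert (0 <= X0 ^ (2 * m + k)) by (apply pow_le; unfold X0; lra).
          assert (z ^ k <= 1) by (apply pow_le_1'; lra).
          apply Rmult_le_pos; [|lra]. apply Rmult_le_pos; [|auto]. apply Rmult_le_pos; auto.
        + apply (ex_series_ext (fun n => plus (scal (z ^ (2 * m)) (t n)) (opp (v n)))); [reflexivity|].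
          apply (@ex_series_minus R_AbsRing R_NormedModule); [apply (@ex_series_scal_l R_AbsRing R_NormedModule)|]; auto. }
    fold v t. lra.
  - rewrite (Series_incr_n u (2 * m + 2)); [|lia|auto].
    replace (Nat.pred (2 * m + 2)) with (2 * m + 1)%nat by lia.
    set (v := fun k => u (2 * m + 2 + k)%nat).
    assert (Ev : ex_series v) by (apply (ex_series_incr_n u); auto).
    assert (Hv : v 0%nat <= Series v).
    { apply Series_ge_term; auto. intros k. unfold v, u. apply Rmult_le_pos; [apply cc_nonneg|apply pow_le; lra]. }
    assert (0 < v 0%nat).
    { unfold v, u. replace (2 * m + 2 + 0)%nat with (2 * S m)%nat by lia.
      apply Rmult_lt_0_compat; [apply cc_even_pos; lia|apply pow_lt; lra]. }
    fold v. lra.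
Qed.
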